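(* In the adaptive clinching auction for one infinitely divisible good (described in the context), with stopping time $f$, the following hold: (1) at any time $t$, if $C(t)\ne\emptyset$ then $C(t)=\{j\in A(t): b_j(t)=b_{\max}(t)\}$, where $b_{\max}(t)=\max_{i\in A(t)}b_i(t)$; (2) for all $t<f$ and all bidders $i$, $S(t)\le D_{-i}(t)$ (the Supply Invariant); and (3) when a bidder $i$ that belongs to the clinching set $C(t)$ drops out of the clinching set, the auction stops at that time.
   Context: One unit of an infinitely divisible good is sold to $n$ bidders; bidder $i$ reports valuation $v_i$ per unit and budget $B_i>0$. The adaptive clinching auction is a process indexed by time $t\ge0$, with price $p(t)$, effective budgets $b_i(t)$, allocations $x_i(t)$, payments $P_i(t)$, and supply $S(t)=1-\sum_ix_i(t)$; initially $p(0)=0$, $x_i(0)=P_i(0)=0$, $b_i(0)=B_i$, $S(0)=1$. Demand $D_i(t)=b_i(t)/p(t)$ and $D_{-i}(t)=\sum_{j\ne i}D_j(t)$. Active set $A(t)=\{j:v_j>p(t),b_j(t)>0\}$, exiting set $E(t)=\{j:v_j=p(t),b_j(t)>0\}$, clinching set $C(t)=\{j\in A(t):S(t)=D_{-j}(t)\}$. With a fixed report-independent ordering of the bidders, the rules (primes are time derivatives; unmentioned quantities are constant) are: (I) if $\sum_{i\in A(t)}D_i(t)\le S(t)$, stop at time $f=t$ and, at unit price $p(t)$ respecting budgets, give each $i\in A(t)$ amount $D_i(t)$ and give the remaining $S(t)-\sum_{i\in A(t)}D_i(t)$ to bidders in $E(t)$; (II) else if $E(t)=\emptyset\ne A(t)$: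 $p'=1$, and for $i\in C(t)$: $b_i'=-S(t)$, $P_i'=S(t)$, $x_i'=S(t)/p(t)$; (III) else if $E(t)\ne\emptyset\ne A(t)$: $p'=0$; for the smallest-index $j\in E(t)$: $b_j'=-1$, $P_j'=x_j'=0$; for $i\in C(t)$: $b_i'=-1$, $P_i'=1$, $x_i'=1/p(t)$. *)

(* Defs.v *)
From HB Require Import structures.
From mathcomp Require Import all_boot all_order all_algebra.
From mathcomp Require Import all_classical all_reals all_analysis.
Set Implicit Arguments. Unset Strict Implicit. Unset Printing Implicit Defensive.
Import Order.TTheory GRing.Theory Num.Theory.
Import numFieldNormedType.Exports.
Local Open Scope ring_scope.
Local Open Scope classical_set_scope.
Local Open Scope ring_scope.

Definition rderiv {R : realType} (g : R -> R) (t d : R) : Prop :=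
  ((fun h : R => h^-1 * (g (t + h) - g t)) @ at_right 0 --> d)%classic.

Section Auction.
Context {R : realType} {n : nat}.
Context (v : 'I_n -> R).
Context (p : R -> R) (b x : 'I_n -> R -> R).

Definition supply (t : R) : R := 1 - \sum_(i < n) x i t.

(* Demand b/p, valued in the extended reals: b/p if p > 0; at price 0 a
   positive budget gives infinite demand (and 0/0 is read as 0). *)
Definition demand (pr bi : R) : \bar R :=
  if 0 < pr then (bi / pr)%:E else if 0 < bi then +oo%E else 0%E.

Definition D (i : 'I_n) (t : R) : \bar R := demand (p t) (b i t).

Definition Dminus (i : 'I_n) (t : R) : \bar R :=
  (\sum_(j < n | j != i) D j t)%E.

Definition active (t : R) : {set 'I_n} :=
  [set j | (p t < v j) && (0 < b j t)]%SET.

Definition exiting (t : R) : {set 'I_n} :=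
  [set j | (v j == p t) && (0 < b j t)]%SET.

Definition clinching (t : R) : {set 'I_n} :=
  [set j in active t | (supply t)%:E == Dminus j t]%SET.

(* b_max(t) = max_{i in A(t)} b_i(t)  (budgets in A(t) are positive) *)
Definition bmax (t : R) : R := \big[Num.max/0]_(i in active t) b i t.

(* the stopping condition of rule (I) *)
Definition stop_cond (t : R) : Prop :=
  ((\sum_(i in active t) D i t)%E <= (supply t)%:E)%E.

(* j is the smallest-index exiting bidder (fixed ordering = index order) *)
Definition first_exiting (t : R) (j : 'I_n) : bool :=
  (j \in exiting t) && [forall k in exiting t, (j <= k)%N].

End Auction.

Definition clinching_auction {R : realType} {n : nat} (v B : 'I_n -> R)
    (f : R) (p : R -> R) (b x P : 'I_n -> R -> R) : Prop :=
  [/\ 0 <= f,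
      p 0 = 0 /\ (forall i, [/\ x i 0 = 0, P i 0 = 0 & b i 0 = B i]),
      {within `[0, f]%classic, continuous p} /\
      (forall i, [/\ {within `[0, f]%classic, continuous (b i)},
                     {within `[0, f]%classic, continuous (x i)} &
                     {within `[0, f]%classic, continuous (P i)}]),
      (forall t, 0 <= t < f ->
         [/\ ~ stop_cond v p b x t,
             active v p b t != finset.set0 &
             if exiting v p b t == finset.set0 then
               (* rule (II) *)
               rderiv p t 1 /\
               (forall i, if i \in clinching v p b x t then
                    [/\ rderiv (b i) t (- supply x t),
                        rderiv (P i) t (supply x t) &
                        rderiv (x i) t (supply x t / p t)]
                  else [/\ rderiv (b i) t 0, rderiv (P i) t 0 &
                           rderiv (x i) t 0])
             else
               (* rule (III) *)
               rderiv p t 0 /\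
               (forall i, if i \in clinching v p b x t then
                    [/\ rderiv (b i) t (-1),
                        rderiv (P i) t 1 &
                        rderiv (x i) t (1 / p t)]
                  else if first_exiting v p b t i then
                    [/\ rderiv (b i) t (-1), rderiv (P i) t 0 &
                        rderiv (x i) t 0]
                  else [/\ rderiv (b i) t 0, rderiv (P i) t 0 &
                           rderiv (x i) t 0])]) &
      stop_cond v p b x f].

(* Main.v *)
Require Import Defs.
From HB Require Import structures.
From mathcomp Require Import all_boot all_order all_algebra.
From mathcomp Require Import all_classical all_reals all_analysis.
From mathcomp Require Import ring lra.
Import Order.TTheory GRing.Theory Num.Theory.
Import numFieldNormedType.Exports.

Module Gen2.
Set Implicit Arguments. Unset Strict Implicit.
Local Open Scope ring_scope.
Local Open Scope classical_set_scope.

Section Gen.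
Variable R : realType.
Implicit Types (g : R -> R) (A : set R).

Lemma rderiv_rcont g t d : rderiv g t d -> (fun h => g (t + h)) @ 0^'+ --> g t.
Proof.
move=> H.
have -> : (fun h => g (t + h)) = (fun h => g t + h * (h^-1 * (g (t + h) - g t))).
  apply/funext => h; have [->|h0] := eqVneq h 0; first by rewrite addr0 mul0r addr0.
  by rewrite mulrA mulfV // mul1r addrCA subrr addr0.
rewrite -[X in _ --> X]addr0; apply: cvgD; first exact: cvg_cst.
suff : (fun h => h * (h^-1 * (g (t + h) - g t))) @ 0^'+ --> 0 * d by rewrite mul0r.
apply: cvgM => //; apply: cvg_at_right_filter; exact: cvg_id.
Qed.

Lemma rderiv_cst_right g t d e : rderiv g t d -> 0 < e ->
  (forall h, 0 < h <= e -> g (t + h) = g t) -> d = 0.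
Proof.
move=> H e0 He.
have H0 : (fun h => h^-1 * (g (t + h) - g t)) @ 0^'+ --> (0:R).
  apply: cvg_near_cst; near=> h; rewrite He ?subrr ?mulr0 //.
  apply/andP; split; near: h; [exact: nbhs_right_gt | exact: nbhs_right_le].
exact: (cvg_unique _ H H0).
Unshelve. all: by end_near.
Qed.

Lemma rderivN g t d : rderiv g t d -> rderiv (fun s => - g s) t (- d).
Proof.
move=> H; rewrite /rderiv.
have -> : (fun h => h^-1 * (- g (t + h) - - g t)) = (fun h => - (h^-1 * (g (t + h) - g t))).
  by apply/funext => h /=; ring.
exact: (cvgN H).
Qed.

Lemma rderivD g1 g2 t d1 d2 : rderiv g1 t d1 -> rderiv g2 t d2 ->
  rderiv (fun s => g1 s + g2 s) t (d1 + d2).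
Proof.
move=> H1 H2; rewrite /rderiv.
have -> : (fun h => h^-1 * (g1 (t + h) + g2 (t + h) - (g1 t + g2 t))) =
  (fun h => h^-1 * (g1 (t + h) - g1 t) + h^-1 * (g2 (t + h) - g2 t)).
  by apply/funext => h /=; ring.
exact: (cvgD H1 H2).
Qed.

Lemma rderiv_cst (c : R) t : rderiv (fun _ => c) t 0.
Proof.
rewrite /rderiv; have -> : (fun h : R => h^-1 * (c - c)) = fun=> 0.
  by apply/funext => h; rewrite subrr mulr0.
exact: cvg_cst.
Qed.

Lemma rderivM g1 g2 t d1 d2 : rderiv g1 t d1 -> rderiv g2 t d2 ->
  rderiv (fun s => g1 s * g2 s) t (d1 * g2 t + g1 t * d2).
Proof.
move=> H1 H2; rewrite /rderiv.
have -> : (fun h => h^-1 * (g1 (t + h) * g2 (t + h) - g1 t * g2 t)) =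
  (fun h => h^-1 * (g1 (t + h) - g1 t) * g2 t +
  g1 (t + h) * (h^-1 * (g2 (t + h) - g2 t))).
  apply/funext => h /=.
  by ring.
have H3 : (fun h => h^-1 * (g1 (t + h) - g1 t) * g2 t) @ 0^'+ --> d1 * g2 t.
  by apply: cvgM => //; exact: cvg_cst.
have H4 : (fun h => g1 (t + h) * (h^-1 * (g2 (t + h) - g2 t))) @ 0^'+ --> g1 t * d2.
  by apply: cvgM => //; exact: rderiv_rcont H1.
exact: (cvgD H3 H4).
Qed.

Lemma rderiv_sum (I : finType) (P : pred I) (F : I -> R -> R) (d : I -> R) t :
  (forall j, P j -> rderiv (F j) t (d j)) ->
  rderiv (fun s => \sum_(j | P j) F j s) t (\sum_(j | P j) d j).
Proof.
move=> H; rewrite /rderiv.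
have -> : (fun h => h^-1 * (\sum_(j | P j) F j (t + h) - \sum_(j | P j) F j t)) =
  (fun h => \sum_(j | P j) (h^-1 * (F j (t + h) - F j t))).
  by apply/funext => h; rewrite -sumrB mulr_sumr.
apply: cvg_big => //; exact: add_continuous.
Qed.



Definition CW A g := forall x : R, A x -> g @ within A (nbhs x) --> g x.

Lemma CW_of A g : {within A, continuous g} -> CW A g.
Proof. by move/subspace_continuousP. Qed.

Lemma of_CW A g : CW A g -> {within A, continuous g}.
Proof. by move=> H; apply/subspace_continuousP. Qed.

Lemma CW_sub A B g : A `<=` B -> CW B g -> CW A g.
Proof. by move=> AB /of_CW/(continuous_subspaceW AB)/CW_of. Qed.

Lemma near_right_ex (P : R -> Prop) (c : R) : 0 < c ->
  (\forall h \near (0:R)^'+, P h) -> exists h, 0 < h <= c /\ P h.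
Proof.
move=> c0 H.
have : \forall h \near (0:R)^'+, [/\ 0 < h, h <= c & P h].
  near=> h; split.
  - near: h; exact: nbhs_right_gt.
  - near: h; exact: nbhs_right_le.
  - near: h; exact: H.
by case/filter_ex => h [h0 hc Ph]; exists h; rewrite h0 hc.
Unshelve. all: by end_near.
Qed.

Lemma within_ex A x (P : R -> Prop) :
  (\forall y \near within A (nbhs x), P y) ->
  exists2 e, 0 < e & forall y, A y -> `|x - y| < e -> P y.
Proof.
rewrite /within => /nbhs_ballP [e e0 H]; exists e => // y Ay xy.
by apply: H => //; rewrite /ball /=.
Qed.


Lemma CW_id A : CW A id.
Proof. by move=> x _; apply: cvg_within_filter; exact: cvg_id. Qed.

Lemma CW_cst A (k : R) : CW A (fun=> k).
Proof. by move=> x _; exact: cvg_cst. Qed.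

Lemma CWD A g1 g2 : CW A g1 -> CW A g2 -> CW A (fun s => g1 s + g2 s).
Proof. by move=> H1 H2 x Ax; exact: (cvgD (H1 x Ax) (H2 x Ax)). Qed.

Lemma CWM A g1 g2 : CW A g1 -> CW A g2 -> CW A (fun s => g1 s * g2 s).
Proof. by move=> H1 H2 x Ax; exact: (cvgM (H1 x Ax) (H2 x Ax)). Qed.

Lemma CWN A g : CW A g -> CW A (fun s => - g s).
Proof. by move=> H x Ax; exact: (cvgN (H x Ax)). Qed.

Lemma CW_sum A (I : finType) (P : pred I) (F : I -> R -> R) :
  (forall j, P j -> CW A (F j)) -> CW A (fun s => \sum_(j | P j) F j s).
Proof.
move=> H x Ax; apply: cvg_big => //; first exact: add_continuous.
by move=> j Pj; exact: H.
Qed.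

End Gen.
Arguments CW {R} A g.

End Gen2.
Import Gen2.

Module T1.
Set Implicit Arguments. Unset Strict Implicit.
Local Open Scope ring_scope.
Local Open Scope classical_set_scope.

Section T1.
Variable R : realType.
Implicit Types (g : R -> R) (A : set R).

Lemma mono_rd g (a c : R) : a <= c -> CW `[a, c] g ->
  (forall t, a <= t < c -> exists2 d, 0 <= d & rderiv g t d) -> g a <= g c.
Proof.
move=> ac Hc Hd; rewrite leNgt; apply/negP => lt.
have {}ac : a < c.
  by rewrite lt_neqAle ac andbT; apply/eqP => E; move: lt; rewrite E ltxx.
pose e := (g a - g c) / (c - a) / 2.
have e0 : 0 < e by rewrite /e !divr_gt0 // subr_gt0.
pose H t := g t + e * (t - a).
have HC : {within `[a, c], continuous H}.
  apply: of_CW; apply: CWD => //; apply: CWM; first exact: CW_cst.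
  apply: CWD; [exact: CW_id | exact: CW_cst].
have [M] := EVT_max (ltW ac) HC.
rewrite in_itv /= => /andP [aM Mc] HM.
have Hca : H c < H a.
  rewrite /H subrr mulr0 addr0 /e.
  have -> : (g a - g c) / (c - a) / 2 * (c - a) = (g a - g c) / 2.
    by field; rewrite subr_eq0 gt_eqF.
  lra.
have Mlt : M < c.
  rewrite lt_neqAle Mc andbT; apply/eqP => E.
  have := HM a; rewrite in_itv /= lexx (ltW ac) E => /(_ isT); lra.
have [d d0 Hder] := Hd M (introT andP (conj aM Mlt)).
have [|h [/andP [h0 hc] Hq]] := @near_right_ex R _ (c - M) _ (cvgr_gt _ Hder (- e) ltac:(lra)).
  by lra.
have := HM (M + h); rewrite in_itv /= => /(_ ltac:(apply/andP; split; lra)).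
rewrite /H.
have : g (M + h) - g M = h * (h^-1 * (g (M + h) - g M)).
  by rewrite mulrA mulfV ?mul1r // gt_eqF.
move: Hq; set q := h^-1 * _ => Hq Hgq.
nra.
Qed.

Lemma const_rd g (a c : R) : a <= c -> CW `[a, c] g ->
  (forall t, a <= t < c -> rderiv g t 0) -> g c = g a.
Proof.
move=> ac Hc Hd; apply/eqP; rewrite eq_le; apply/andP; split.
  have := mono_rd ac (CWN Hc); rewrite lerN2; apply.
  by move=> t /Hd /rderivN; rewrite oppr0 => ?; exists 0.
by apply: mono_rd => // t /Hd ?; exists 0.
Qed.

End T1.

End T1.
Import T1.

Module T2.
Set Implicit Arguments. Unset Strict Implicit.
Local Open Scope ring_scope.
Local Open Scope classical_set_scope.

Section T2.
Variable R : realType.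
Implicit Types (g : R -> R) (A : set R).

Lemma last_zero g (a c : R) : a <= c -> CW `[a, c] g -> g a <= 0 -> 0 < g c ->
  exists t0, [/\ a <= t0, t0 < c, g t0 = 0 & forall t, t0 < t <= c -> 0 < g t].
Proof.
move=> ac Hc ga gc.
pose E := [set t : R | a <= t <= c /\ g t <= 0].
have Ea : E a by split => //; rewrite lexx ac.
have ub : ubound E c by move=> t [/andP [_ ?] _].
have hs : has_sup E by split; [exists a | exists c].
pose t0 := sup E.
have at0 : a <= t0 := sup_upper_bound hs Ea.
have t0c : t0 <= c := ge_sup (ex_intro _ a Ea) ub.
have Hgt : forall t, t0 < t <= c -> 0 < g t.
  move=> t /andP [t0t tc]; rewrite ltNge; apply/negP => gt.
  have : E t by split => //; rewrite tc andbT; apply: (le_trans at0); exact: ltW.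
  move/(sup_upper_bound hs); rewrite -/t0 => ?; lra.
have t0in : `[a, c] t0 by rewrite /= in_itv /= at0 t0c.
have g0 : g t0 = 0.
  apply/eqP; rewrite eq_le; apply/andP; split.
    rewrite leNgt; apply/negP => gpos.
    have /within_ex [del del0 Hdel] : \forall y \near within `[a, c] (nbhs t0), 0 < g y.
      by apply: cvgr_gt (Hc t0 t0in) _ gpos.
    have [e Ee te] := sup_adherent del0 hs.
    have et0 : e <= t0 := sup_upper_bound hs Ee.
    case: Ee => /andP [ae ec] ge.
    have : 0 < g e.
      apply: Hdel; first by rewrite /= in_itv /= ae ec.
      rewrite ger0_norm ?subr_ge0 //; rewrite /t0 in te *; lra.
    lra.
  rewrite leNgt; apply/negP => gneg.
  have /within_ex [del del0 Hdel] : \forall y \near within `[a, c] (nbhs t0), g y < 0.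
    by apply: cvgr_lt (Hc t0 t0in) _ gneg.
  have t0c' : t0 < c.
    rewrite lt_neqAle t0c andbT; apply/eqP => E0.
    by move: gneg; rewrite E0 => ?; lra.
  pose y := Num.min (t0 + del / 2) c.
  have t0y : t0 < y by rewrite /y lt_min t0c' andbT; lra.
  have yc : y <= c by rewrite /y ge_min lexx orbT.
  have yd : y <= t0 + del / 2 by rewrite /y ge_min lexx.
  have : g y < 0.
    apply: Hdel; first by rewrite /= in_itv /= yc andbT; apply: (le_trans at0); exact: ltW.
    rewrite ltr0_norm ?subr_lt0 //; lra.
  have := Hgt y (introT andP (conj t0y yc)); lra.
exists t0; split => //.
by rewrite lt_neqAle t0c andbT; apply/eqP => E0; move: gc; rewrite -E0 g0 ltxx.
Qed.

Lemma nonneg_rd g (a c : R) : a <= c -> CW `[a, c] g -> 0 <= g a ->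
  (forall t, a <= t < c -> g t <= 0 -> rderiv g t 0) ->
  forall t, a <= t <= c -> 0 <= g t.
Proof.
move=> ac Hc ga Hd t /andP [at1 tc]; rewrite leNgt; apply/negP => gt.
have Hc' : CW `[a, t] (fun s => - g s).
  apply: CWN; apply: CW_sub Hc => s /=; rewrite !in_itv /= => /andP [? ?].
  by rewrite (le_trans _ tc) // andbT.
have [t0 [at0 t0t g0 Hpos]] := last_zero at1 Hc' ltac:(simpl; lra) ltac:(simpl; lra).
have : g t = g t0.
  apply: const_rd; first exact: ltW.
    apply: CW_sub Hc => s /=; rewrite !in_itv /= => /andP [? ?].
    by rewrite (le_trans at0) // (le_trans _ tc).
  move=> s /andP [t0s st]; apply: Hd.
    by rewrite (le_trans at0) //= (lt_le_trans st).
  have [->|ne] := eqVneq s t0; first by move: g0 => /=; lra.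
  have := Hpos s; rewrite (ltW st) andbT lt_neqAle eq_sym ne t0s => /(_ isT) /=; lra.
move: g0 => /= g0; lra.
Qed.

End T2.

End T2.
Import T2.

Module Auc.
Set Implicit Arguments. Unset Strict Implicit.
Local Open Scope ring_scope.

Section Auc.
Variables (R : realType) (n : nat) (v B : 'I_n -> R) (f : R) (p : R -> R)
  (b x P : 'I_n -> R -> R).
Hypotheses (hn : (2 <= n)%N) (hv : forall i, 0 < v i) (hB : forall i, 0 < B i)
  (HA : clinching_auction v B f p b x P).

Local Notation A := (active v p b).
Local Notation E := (exiting v p b).
Local Notation C := (clinching v p b x).
Local Notation S := (supply x).

Definition dpf t : R := if E t == finset.set0 then 1 else 0.
Definition dxf t j : R := if E t == finset.set0 then
  (if j \in C t then S t / p t else 0) else (if j \in C t then 1 / p t else 0).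
Definition dbf t j : R := if E t == finset.set0 then
  (if j \in C t then - S t else 0) else
  (if j \in C t then -1 else if first_exiting v p b t j then -1 else 0).

Lemma f_ge0 : 0 <= f. Proof. by case: HA. Qed.
Lemma p0 : p 0 = 0. Proof. by case: HA => _ [] . Qed.
Lemma init i : x i 0 = 0 /\ b i 0 = B i.
Proof. by case: HA => _ [_ /(_ i) [? ? ?]]. Qed.
Lemma stopf : stop_cond v p b x f. Proof. by case: HA. Qed.

Lemma CWp : CW `[0, f]%classic p.
Proof. by case: HA => _ _ [/CW_of ? _]. Qed.
Lemma CWb i : CW `[0, f]%classic (b i).
Proof. by case: HA => _ _ [_ /(_ i) [/CW_of ? _ _]]. Qed.
Lemma CWx i : CW `[0, f]%classic (x i).
Proof. by case: HA => _ _ [_ /(_ i) [_ /CW_of ? _]]. Qed.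

Lemma rules t : 0 <= t < f -> [/\ ~ stop_cond v p b x t, A t != finset.set0 &
  rderiv p t (dpf t) /\ forall j, rderiv (b j) t (dbf t j) /\ rderiv (x j) t (dxf t j)].
Proof.
move=> ht; case: HA => _ _ _ /(_ t ht) [ns nA Hr] _; split => //.
rewrite /dpf /dbf /dxf; case: ifP Hr => _ [Hp Hj]; split => // j; have := Hj j.
  by case: ifP => _ [].
by case: ifP => _; [case | case: ifP => _ []].
Qed.


Lemma itv_sub (a c a' c' : R) : a' <= a -> c <= c' ->
  (`[a, c] `<=` `[a', c'])%classic.
Proof.
move=> h1 h2 y /=; rewrite !in_itv /= => /andP [h3 h4].
by rewrite (le_trans h1 h3) (le_trans h4 h2).
Qed.

Lemma A0 j : j \in A 0.
Proof. by rewrite /active inE p0 hv (init j).2 hB. Qed.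

Lemma D0 j : D p b j 0 = +oo%E.
Proof. by rewrite /D /demand p0 ltxx (init j).2 hB. Qed.

Lemma esum_oo (I : finType) (Q : pred I) (F : I -> \bar R) j :
  Q j -> F j = +oo%E -> (forall k, Q k -> (0 <= F k)%E) ->
  (\sum_(k | Q k) F k)%E = +oo%E.
Proof.
move=> Qj Fj F0; rewrite (bigD1 j) //= Fj addye //.
have : (0 <= \sum_(i | Q i && (i != j)) F i)%E.
  by apply: sume_ge0 => k /andP [Qk _]; exact: F0.
by apply: contraTneq => ->.
Qed.

Lemma n0 : (0 < n)%N.
Proof. by apply: leq_trans hn. Qed.

Lemma nstop0 : ~ stop_cond v p b x 0.
Proof.
rewrite /stop_cond (@esum_oo _ _ _ (Ordinal n0)) ?A0 ?D0 // ?leye_eq //.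
by move=> k _; rewrite D0 le0y.
Qed.

Lemma f_gt0 : 0 < f.
Proof.
rewrite lt_neqAle f_ge0 andbT; apply/eqP => E0; apply: nstop0.
by rewrite E0; exact: stopf.
Qed.

Lemma p_mono s t : 0 <= s -> s <= t -> t <= f -> p s <= p t.
Proof.
move=> s0 st tf; apply: mono_rd => //.
  by apply: CW_sub CWp; apply: itv_sub.
move=> u /andP [su ut].
have [_ _ [Hp _]] := rules (introT andP (conj (le_trans s0 su) (lt_le_trans ut tf))).
by exists (dpf u) => //; rewrite /dpf; case: ifP.
Qed.

Lemma E0 : E 0 = finset.set0.
Proof. by apply/setP => j; rewrite !inE p0 gt_eqF. Qed.

Lemma p_pos t : 0 < t -> t <= f -> 0 < p t.
Proof.
move=> t0 tf.
have [_ _ [Hp _]] := rules (introT andP (conj (lexx 0) f_gt0)).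
move: Hp; rewrite /dpf E0 eqxx => Hp.
have [h [/andP [h0 ht] Hq]] := near_right_ex t0 (cvgr_gt _ Hp (1/2) ltac:(lra)).
move: Hq; rewrite add0r p0 subr0 => Hq.
have hi : 0 < h^-1 by rewrite invr_gt0.
have ph : 0 < p h by nra.
by apply: (lt_le_trans ph); apply: p_mono => //; exact: ltW.
Qed.


Lemma C_sub t j : j \in C t -> j \in A t.
Proof. by rewrite inE => /andP []. Qed.
Lemma A_prop t j : j \in A t -> p t < v j /\ 0 < b j t.
Proof. by rewrite inE => /andP []. Qed.
Lemma E_prop t j : j \in E t -> v j = p t /\ 0 < b j t.
Proof. by rewrite inE => /andP [/eqP]. Qed.
Lemma fe_E t j : first_exiting v p b t j -> j \in E t.
Proof. by case/andP. Qed.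

Lemma tin t : 0 <= t <= f -> 0 <= t < f \/ t = f.
Proof.
case/andP => t0 tf; have [tlt|] := ltP t f; first by left; rewrite t0.
by move=> ft; right; apply/eqP; rewrite eq_le tf.
Qed.

Lemma b_nonneg j t : 0 <= t <= f -> 0 <= b j t.
Proof.
move: t; apply: (nonneg_rd f_ge0 (@CWb j)); first by rewrite (init j).2 ltW.
move=> u hu bu; have [_ _ [_ /(_ j) [Hb _]]] := rules hu.
suff -> : 0 = dbf u j by [].
rewrite /dbf; case: ifP => _.
  by case: ifP => // /C_sub /A_prop [_]; lra.
case: ifP => [/C_sub /A_prop [_]|_]; first by lra.
by case: ifP => // /fe_E /E_prop [_]; lra.
Qed.

Definition g i t := p t * S t - \sum_(j | j != i) b j t.

Lemma D_pos t j : 0 < p t -> D p b j t = (b j t / p t)%:E.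
Proof. by move=> pt; rewrite /D /demand pt. Qed.

Lemma Dminus_pos t i : 0 < p t ->
  Dminus p b i t = ((\sum_(j | j != i) b j t) / p t)%:E.
Proof.
move=> pt; rewrite /Dminus (eq_bigr (fun j => (b j t / p t)%:E)) => [|j _].
  by rewrite sumEFin mulr_suml.
exact: D_pos.
Qed.

Lemma sumA_pos t : 0 < p t ->
  (\sum_(j in A t) D p b j t)%E = ((\sum_(j in A t) b j t) / p t)%:E.
Proof.
move=> pt; rewrite (eq_bigr (fun j => (b j t / p t)%:E)) => [|j _].
  by rewrite sumEFin mulr_suml.
exact: D_pos.
Qed.

Lemma C_iff t i : 0 < p t -> (i \in C t) = (i \in A t) && (g i t == 0).
Proof.
move=> pt; rewrite /clinching inE Dminus_pos // eqe /g; congr (_ && _).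
have pn : p t != 0 by rewrite gt_eqF.
apply/eqP/eqP => h.
  by rewrite h; field.
by move/eqP: h; rewrite subr_eq0 => /eqP <-; field.
Qed.

Lemma S0 : S 0 = 1.
Proof. by rewrite /supply big1 ?subr0 // => j _; exact: (init j).1. Qed.

Lemma sum_ge_term (I : finType) (Q : pred I) (F : I -> R) j : Q j ->
  (forall k, Q k -> 0 <= F k) -> F j <= \sum_(k | Q k) F k.
Proof.
move=> Qj F0; rewrite (bigD1 j) //= lerDl sumr_ge0 // => k /andP [Qk _].
exact: F0.
Qed.

Lemma sumb_ge0 t (Q : pred 'I_n) : 0 <= t <= f -> 0 <= \sum_(k | Q k) b k t.
Proof. by move=> ht; apply: sumr_ge0 => k _; exact: b_nonneg. Qed.

Lemma C_S_ge0 t j : 0 < t -> t <= f -> j \in C t -> 0 <= S t.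
Proof.
move=> t0 tf; have pt := p_pos t0 tf.
rewrite C_iff // /g => /andP [_]; rewrite subr_eq0 => /eqP h.
have : 0 <= p t * S t by rewrite h sumb_ge0 // ltW.
by rewrite pmulr_rge0.
Qed.

Lemma CW_S : CW `[0, f]%classic S.
Proof.
rewrite /supply; apply: CWD; first exact: CW_cst.
by apply: CWN; apply: CW_sum => j _; exact: CWx.
Qed.

Lemma rd_S t : 0 <= t < f -> rderiv S t (- \sum_j dxf t j).
Proof.
move=> ht; have [_ _ [_ Hj]] := rules ht.
have := rderivD (rderiv_cst 1 t) (rderivN (rderiv_sum (fun j (_ : true) => (Hj j).2))).
by rewrite add0r.
Qed.


Lemma pos_of (t : R) : 0 <= t -> t != 0 -> 0 < t.
Proof. by move=> t0 tn; rewrite lt_neqAle eq_sym tn t0. Qed.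

Lemma S_nonneg t : 0 <= t <= f -> 0 <= S t.
Proof.
move: t; apply: (nonneg_rd f_ge0 CW_S); first by rewrite S0.
move=> u hu Su; have := rd_S hu.
suff -> : \sum_j dxf u j = 0 by rewrite oppr0.
case/andP: hu => u0 uf.
have [u00|un] := eqVneq u 0; first by move: Su; rewrite u00 S0; lra.
have u0' := pos_of u0 un; have pu := p_pos u0' (ltW uf).
apply: big1 => j _; rewrite /dxf; case: ifP => hE; case: ifP => hC //.
  have := C_S_ge0 u0' (ltW uf) hC => Sg.
  have -> : S u = 0 by lra.
  by rewrite mul0r.
exfalso; move/negbT: hE => /set0Pn [k hk].
have [vk bk] := E_prop hk; have [pj _] := A_prop (C_sub hC).
have hkj : k != j by apply/eqP => kj; move: vk pj; rewrite kj; lra.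
have hsum := @sum_ge_term _ (fun k' => k' != j) (fun k' => b k' u) k hkj
  (fun k' _ => b_nonneg k' (introT andP (conj u0 (ltW uf)))).
move: hC; rewrite C_iff // /g => /andP [_]; rewrite subr_eq0 => /eqP h.
have : 0 < p u * S u by rewrite h; exact: (lt_le_trans bk).
by rewrite pmulr_rgt0 //; lra.
Qed.

Lemma notA_neg t i : 0 < t -> t < f -> i \notin A t -> g i t < 0.
Proof.
move=> t0 tf iA; have pt := p_pos t0 (ltW tf).
have [ns _ _] := rules (introT andP (conj (ltW t0) tf)).
have hlt : p t * S t < \sum_(j in A t) b j t.
  rewrite ltNge; apply/negP => hle; apply: ns.
  by rewrite /stop_cond sumA_pos // lee_fin ler_pdivrMr // mulrC.
have hle : \sum_(j in A t) b j t <= \sum_(j | j != i) b j t.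
  rewrite [X in X <= _]big_mkcond [X in _ <= X]big_mkcond /=.
  apply: ler_sum => j _; case: ifP => jA.
    have -> : j != i by apply/eqP => ji; move: iA; rewrite -ji jA.
    exact: lexx.
  by case: ifP => // _; apply: b_nonneg; rewrite (ltW t0) (ltW tf).
rewrite /g; lra.
Qed.


Lemma CW_g i : CW `[0, f]%classic (g i).
Proof.
rewrite /g; apply: CWD; first by apply: CWM; [exact: CWp | exact: CW_S].
by apply: CWN; apply: CW_sum => j _; exact: (@CWb j).
Qed.

Lemma rd_g i t : 0 <= t < f -> rderiv (g i) t
  (dpf t * S t + p t * (- \sum_j dxf t j) + - \sum_(j | j != i) dbf t j).
Proof.
move=> ht; have [_ _ [Hp Hj]] := rules ht.
exact: (rderivD (rderivM Hp (rd_S ht)) (rderivN (rderiv_sum (fun j (_ : j != i) => (Hj j).1)))).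
Qed.

Lemma fe_ex t : E t != finset.set0 -> exists j, first_exiting v p b t j.
Proof.
case/set0Pn => j0 hj0; exists [arg min_(j < j0 in E t) (j : nat)].
case: arg_minnP => // j hj hmin; rewrite /first_exiting hj /=.
by apply/forallP => k; apply/implyP => hk; exact: hmin.
Qed.

Lemma dg_ge0 i t : 0 < t -> t < f ->
  0 <= dpf t * S t + p t * (- \sum_j dxf t j) + - \sum_(j | j != i) dbf t j.
Proof.
move=> t0 tf; have pt := p_pos t0 (ltW tf).
have Sg := S_nonneg (introT andP (conj (ltW t0) (ltW tf))).
have pn : p t != 0 by rewrite gt_eqF.
rewrite /dpf /dxf /dbf; case hE: (E t == finset.set0).
  rewrite (bigD1 i) //=.
  have H1 : \sum_(j | j != i) (if j \in C t then - S t else 0) =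
      - (p t * \sum_(j | j != i) (if j \in C t then S t / p t else 0)).
    rewrite mulr_sumr -sumrN; apply: eq_bigr => j _.
    by case: ifP => _; [field | rewrite mulr0 oppr0].
  rewrite H1; case: ifP => _.
    have : p t * (S t / p t) = S t by field.
    lra.
  lra.
rewrite (bigD1 i) //=.
pose e1 j : R := if j \in C t then 0 else if first_exiting v p b t j then 1 else 0.
have H1 : \sum_(j | j != i)
      (if j \in C t then -1 else if first_exiting v p b t j then -1 else 0) =
    - (p t * \sum_(j | j != i) (if j \in C t then 1 / p t else 0)) -
      \sum_(j | j != i) e1 j.
  rewrite mulr_sumr -sumrN -sumrB; apply: eq_bigr => j _; rewrite /e1.
  by case: (j \in C t); case: (first_exiting v p b t j) => /=; field.
rewrite H1.
have e0 : 0 <= \sum_(j | j != i) e1 j.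
  by apply: sumr_ge0 => j _; rewrite /e1; case: ifP => _ //; case: ifP.
case: ifP => hiC; last by lra.
have : p t * (1 / p t) = 1 by field.
have [k hk] := fe_ex (negbT hE).
have hki : k != i.
  apply/eqP => ki; have [vk _] := E_prop (fe_E hk); have [pv _] := A_prop (C_sub hiC).
  by move: vk pv; rewrite ki; lra.
have hkC : k \notin C t.
  apply/negP => /C_sub /A_prop [pv _]; have [vk _] := E_prop (fe_E hk); lra.
have ek : e1 k = 1 by rewrite /e1 (negbTE hkC) hk.
have := @sum_ge_term _ (fun j => j != i) e1 k hki.
rewrite ek => /(_ ltac:(by move=> j _; rewrite /e1; case: ifP => _ //; case: ifP)).
lra.
Qed.

Lemma dxf_ge0 u j : 0 < u -> u < f -> 0 <= dxf u j.
Proof.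
move=> u0 uf; have pu := p_pos u0 (ltW uf).
have Sg := S_nonneg (introT andP (conj (ltW u0) (ltW uf))).
rewrite /dxf; case: ifP => _; case: ifP => _ //.
  by rewrite divr_ge0 // ltW.
by rewrite divr_ge0 // ltW.
Qed.


Lemma ex_neq i : exists j : 'I_n, j != i.
Proof.
have [->|ne] := eqVneq i (Ordinal n0).
  by exists (Ordinal hn); apply/eqP => /(congr1 val).
by exists (Ordinal n0); rewrite eq_sym.
Qed.

Lemma g0neg i : g i 0 < 0.
Proof.
rewrite /g p0 mul0r sub0r oppr_lt0.
have [j ji] := ex_neq i.
have := @sum_ge_term _ (fun k => k != i) (fun k => b k 0) j ji.
rewrite (init j).2 => /(_ ltac:(by move=> k _; rewrite (init k).2 ltW)).
by apply: lt_le_trans.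
Qed.

Lemma g_le0 i t : 0 <= t < f -> g i t <= 0.
Proof.
case/andP => t0 tf; rewrite leNgt; apply/negP => gpos.
have Hc : CW `[0, t]%classic (g i).
  refine (CW_sub _ (@CW_g i)).
  by apply: itv_sub => //; exact: ltW.
have [z [z0 zt gz Hpos]] := last_zero t0 Hc (ltW (g0neg i)) gpos.
have zn : z != 0 by apply/eqP => zz; move: gz; rewrite zz => gz; have := g0neg i; lra.
have zp := pos_of z0 zn.
have zf : z < f by apply: lt_trans tf.
have pz := p_pos zp (ltW zf).
have iA : i \in A z by apply/negPn/negP => /(notA_neg zp zf); lra.
have iC : i \in C z by rewrite C_iff // iA gz eqxx.
have Hx : forall u, z < u < t -> dxf u i = 0.
  move=> u /andP [zu ut].
  have up : 0 < u by apply: lt_trans zu.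
  have uf : u < f by apply: lt_trans tf.
  have nC : i \notin C u.
    rewrite C_iff ?p_pos // ?(ltW uf) //; apply/negP => /andP [_ /eqP gu].
    by have := Hpos u; rewrite (ltW ut) zu gu ltxx => /(_ isT).
  by rewrite /dxf (negbTE nC); case: ifP.
have Hconst : forall u, z < u <= t -> x i u = x i t.
  move=> u /andP [zu ut]; apply/esym; apply: const_rd => //.
    apply: CW_sub (@CWx i); apply: itv_sub; last by apply: ltW; apply: le_lt_trans tf.
    by apply: ltW; apply: le_lt_trans zu.
  move=> w /andP [uw wt].
  have hw : 0 <= w < f.
    by rewrite (le_trans z0) ?(lt_trans wt tf) // ltW // (lt_le_trans zu uw).
  have [_ _ [_ /(_ i) [_ Hw]]] := rules hw.
  by rewrite -(Hx w) // (lt_le_trans zu uw) wt.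
have [_ _ [_ Hz]] := rules (introT andP (conj z0 zf)).
have xzt : x i t = x i z.
  have H1 := rderiv_rcont (Hz i).2.
  have H2 : ((fun h => x i (z + h)) @ 0^'+ --> x i t)%classic.
    apply: cvg_near_cst; near=> h; apply: Hconst; apply/andP; split.
      by rewrite ltrDl; near: h; exact: nbhs_right_gt.
    by rewrite -lerBrDl; near: h; apply: nbhs_right_le; rewrite subr_gt0.
  exact: (cvg_unique _ H2 H1).
have dz : dxf z i = 0.
  apply: (rderiv_cst_right (Hz i).2 (e := t - z)).
    by rewrite subr_gt0.
  move=> h /andP [h0 ht]; rewrite -xzt; apply: Hconst.
  by rewrite ltrDl h0 -lerBrDl.
have pzn : p z != 0 by rewrite gt_eqF.
move: dz; rewrite /dxf iC; case: ifP => hE => dz; last first.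
  have : p z * (1 / p z) = 1 by field.
  by rewrite dz mulr0 => /eqP; rewrite eq_sym oner_eq0.
have Sz : S z = 0.
  have -> : S z = S z / p z * p z by field.
  by rewrite dz mul0r.
have Stz : - S z <= - S t.
  apply: (@mono_rd _ (fun s => - S s) z t (ltW zt)).
    apply: CWN; apply: (CW_sub _ CW_S); apply: itv_sub => //; exact: ltW.
  move=> w /andP [zw wt].
  have hw : 0 <= w < f by rewrite (le_trans z0) // (lt_trans wt tf).
  exists (- - \sum_j dxf w j); last exact: rderivN (rd_S hw).
  rewrite opprK; apply: sumr_ge0 => j _; apply: dxf_ge0; last exact: lt_trans tf.
  by apply: lt_le_trans zw.
have St0 := S_nonneg (introT andP (conj t0 (ltW tf))).
have St : S t = 0 by lra.
move: gpos; rewrite /g St mulr0 sub0r oppr_gt0 ltNge.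
by rewrite sumb_ge0 // t0 ltW.
Unshelve. all: by end_near.
Qed.


Local Open Scope classical_set_scope.
Local Open Scope ring_scope.

Lemma g_le0_f i : g i f <= 0.
Proof.
rewrite leNgt; apply/negP => gpos.
have fin : (`[0, f]%classic : set R) f by rewrite /= in_itv /= f_ge0 lexx.
have /within_ex [del del0 Hdel] : \forall y \near within `[0, f]%classic (nbhs f), 0 < g i y.
  by apply: cvgr_gt (@CW_g i f fin) _ gpos.
pose y := Num.max 0 (f - del / 2).
have y0 : 0 <= y by rewrite /y le_max lexx.
have y1 : f - del / 2 <= y by rewrite /y le_max lexx orbT.
have yf : y < f by rewrite /y gt_max f_gt0; lra.
have : 0 < g i y.
  apply: Hdel; first by rewrite /= in_itv /= y0 ltW.
  rewrite ger0_norm; lra.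
by have := g_le0 i (introT andP (conj y0 yf)); lra.
Qed.

Lemma g_le0_all i t : 0 <= t <= f -> g i t <= 0.
Proof. by case/tin => [/g_le0 //|->]; exact: g_le0_f. Qed.

Lemma Dminus0 j : Dminus p b j 0 = +oo%E.
Proof.
have [k kj] := ex_neq j.
by rewrite /Dminus (@esum_oo _ _ _ k) // ?D0 // => k' _; rewrite D0 le0y.
Qed.

Lemma C_pos t j : 0 <= t -> j \in C t -> 0 < t.
Proof.
move=> t0 hC; apply: pos_of => //; apply/eqP => tz; move: hC.
by rewrite tz /clinching inE Dminus0 andbF.
Qed.

Lemma sum_neq k t : \sum_(j | j != k) b j t = \sum_j b j t - b k t.
Proof. by rewrite [X in _ = X - _](bigD1 k) //= addrC addrK. Qed.


Lemma lemma2_sec :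
  [/\ (forall t, 0 <= t <= f -> clinching v p b x t != finset.set0 ->
         clinching v p b x t =
           [set j in active v p b t | b j t == bmax v p b t]%SET),
      (forall t (i : 'I_n), 0 <= t < f ->
         ((supply x t)%:E <= Dminus p b i t)%E) &
      (forall (i : 'I_n) s t, 0 <= s <= t -> t <= f ->
         i \in clinching v p b x s -> i \notin clinching v p b x t ->
         t = f)].
Proof.
split.
- move=> t ht /set0Pn [j0 hj0].
  have t0 : 0 < t by apply: (C_pos _ hj0); case/andP: ht.
  have pt : 0 < p t by apply: p_pos t0 _; case/andP: ht.
  have gj0 : g j0 t = 0 by move: hj0; rewrite C_iff // => /andP [_ /eqP].
  have hmax k : b k t <= b j0 t.
    by have := g_le0_all k ht; move: gj0; rewrite /g !sum_neq; lra.
  have hb : bmax v p b t = b j0 t.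
    rewrite /bmax (bigD1 j0) ?(C_sub hj0) //=; apply: max_l.
    elim/big_rec: _ => [|k y _ hy]; first exact: b_nonneg.
    by rewrite ge_max hmax hy.
  apply/setP => j; rewrite [RHS]inE C_iff //; case: (j \in A t) => //=.
  by apply/eqP/eqP => h; move: gj0 h; rewrite /g !sum_neq hb; lra.
- move=> t i /andP [t0 tf].
  have [->|tn] := eqVneq t 0; first by rewrite Dminus0 leey.
  have tp := pos_of t0 tn; have pt := p_pos tp (ltW tf).
  rewrite Dminus_pos // lee_fin ler_pdivlMr // mulrC.
  by have := g_le0 i (introT andP (conj t0 tf)); rewrite /g; lra.
- move=> i s t /andP [s0 st] tf hs ht.
  apply/eqP; rewrite eq_le tf /= leNgt; apply/negP => tlt.
  have sp := C_pos s0 hs; have tp := lt_le_trans sp st.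
  have gs : g i s = 0 by move: hs; rewrite C_iff ?p_pos ?(le_trans st) // => /andP [_ /eqP].
  have gt : g i t < 0.
    case iA: (i \in A t); last by apply: notA_neg => //; rewrite iA.
    have := g_le0 i (introT andP (conj (ltW tp) tlt)).
    rewrite le_eqVlt => /orP [/eqP ge|//]; move: ht.
    by rewrite C_iff ?p_pos // ?(ltW tlt) // iA ge eqxx.
  have hm : g i s <= g i t.
    apply: (@mono_rd _ (g i) s t st).
      by apply: (CW_sub _ (@CW_g i)); apply: itv_sub.
    move=> u /andP [su ut].
    have up : 0 < u by apply: lt_le_trans su.
    have uf : u < f by apply: lt_trans tlt.
    exists (dpf u * S u + p u * (- \sum_j dxf u j) + - \sum_(j | j != i) dbf u j).
      exact: dg_ge0.
    by apply: rd_g; rewrite (ltW up) uf.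
  lra.
Qed.

End Auc.

End Auc.
Import Auc.

Unset Implicit Arguments.
Local Open Scope ring_scope.

Theorem lemma2 (R : realType) (n : nat) (v B : 'I_n -> R) (f : R)
    (p : R -> R) (b x P : 'I_n -> R -> R) :
  (2 <= n)%N ->
  (forall i, 0 < v i) ->
  (forall i, 0 < B i) ->
  clinching_auction v B f p b x P ->
  [/\ (* (1) structure of the clinching set *)
      (forall t, 0 <= t <= f -> clinching v p b x t != finset.set0 ->
         clinching v p b x t =
           [set j in active v p b t | b j t == bmax v p b t]%SET),
      (* (2) Supply Invariant *)
      (forall t (i : 'I_n), 0 <= t < f ->
         ((supply x t)%:E <= Dminus p b i t)%E) &
      (* (3) a bidder dropping out of the clinching set stops the auction *)
      (forall (i : 'I_n) s t, 0 <= s <= t -> t <= f ->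
         i \in clinching v p b x s -> i \notin clinching v p b x t ->
         t = f)].
Proof.
move=> hn hv hB HA; exact: (lemma2_sec hn hv hB HA).
Qed.
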